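(* Let $\Gamma$ be a sizeable graph with partitions $A=A_0\sqcup A_1$, $B=B_0\sqcup B_1$ as in the definition of sizeable, such that each of the four defining subgraphs $\Gamma(A_s\sqcup B_t)$, $s,t\in\{0,1\}$, is a path. Then $\Gamma$ has at least $28$ vertices.
   Context: A simplicial graph $\Gamma$ is sizeable if it is bipartite on vertex sets $A$ and $B$, contains no cycle of length $4$, and there are partitions $A=A_0\sqcup A_1$, $B=B_0\sqcup B_1$ such that each induced subgraph $\Gamma(A_s\sqcup B_t)$, $s,t\in\{0,1\}$, is connected; these four induced subgraphs are the defining subgraphs. *)

(* Defs.v *)
(* A simple graph is a symmetric irreflexive relation e on a finType V. *)
From mathcomp Require Import all_boot.
Set Implicit Arguments. Unset Strict Implicit. Unset Printing Implicit Defensive.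

Section Graphs.
Variable V : finType.
Variable e : rel V.

Definition induced_rel (S : {set V}) : rel V :=
  [rel x y | [&& e x y, x \in S & y \in S]].

Definition induced_connected (S : {set V}) : Prop :=
  S != set0 /\ forall x y, x \in S -> y \in S -> connect (induced_rel S) x y.

(* the induced subgraph on S is a path graph P_n (n >= 1): its vertices can be
   listed without repetition as p_0, ..., p_{n-1} such that p_i ~ p_j iff |i-j| = 1 *)
Definition induced_path (S : {set V}) : Prop :=
  exists (x : V) (s : seq V),
    [/\ uniq (x :: s), S = [set y in x :: s] &
        forall i j, i < size (x :: s) -> j < size (x :: s) ->
          e (nth x (x :: s) i) (nth x (x :: s) j) = (i == j.+1) || (j == i.+1)].

Definition no_C4 : Prop :=
  ~ exists a b c d : V,
      [/\ uniq [:: a; b; c; d], e a b, e b c, e c d & e d a].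

Definition bipartite_on (A B : {set V}) : Prop :=
  [/\ A :|: B = setT, [disjoint A & B] &
      forall x y, e x y -> (x \in A) && (y \in B) || (x \in B) && (y \in A)].

Definition partition2 (S S0 S1 : {set V}) : Prop :=
  [/\ S = S0 :|: S1, [disjoint S0 & S1], S0 != set0 & S1 != set0].

Definition part (S0 S1 : {set V}) (s : bool) : {set V} := if s then S1 else S0.

Definition sizeable_with (A B A0 A1 B0 B1 : {set V}) : Prop :=
  [/\ bipartite_on A B, no_C4, partition2 A A0 A1, partition2 B B0 B1 &
      forall s t : bool, induced_connected (part A0 A1 s :|: part B0 B1 t)].

End Graphs.

(* Main.v *)
Require Import Defs.
From mathcomp Require Import all_boot zify.
Set Implicit Arguments. Unset Strict Implicit. Unset Printing Implicit Defensive.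

Lemma sum_eq_nat (n k : nat) : \sum_(0 <= j < n) (j == k) = (k < n).
Proof.
elim: n => [|n IH]; first by rewrite big_geq.
rewrite big_nat_recr //= IH [in RHS]ltnS.
by case: (ltngtP k n).
Qed.

Lemma sum_eqS_nat (n i : nat) :
  \sum_(0 <= j < n) (i == j.+1) = (0 < i) && (i <= n).
Proof.
elim: n => [|n IH]; first by rewrite big_geq //; case: i.
rewrite big_nat_recr //= IH.
move: IH; case: i => [|i] //= _; rewrite eqSS [in RHS]ltnS.
by case: (ltngtP i n).
Qed.

Lemma telesc (n : nat) (f : nat -> nat) :
  (forall i, i < n -> f i + f i.+1 = 1) ->
  \sum_(0 <= i < n.+1) f i * ((0 < i) + (i.+1 < n.+1)) = n.
Proof.
move=> hf.
rewrite (eq_big_nat _ _ (F2 := fun i => f i * (0 < i) + f i * (i.+1 < n.+1))); last first.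
  by move=> i _; rewrite mulnDr.
rewrite big_split /= big_nat_recl // big_nat_recr //= muln0 ltnn muln0 add0n addn0.
rewrite -big_split /=.
rewrite (eq_big_nat _ _ (F2 := fun _ => 1)); last first.
  move=> i /andP[_ hi]; rewrite ltnS hi !muln1 addnC; exact: hf.
by rewrite sum_nat_const_nat muln1 subn0.
Qed.
Lemma deg_formula (V : finType) (e : rel V) (X Y : {set V}) (x : V) (p : seq V) (i : nat) :
  uniq p -> X :|: Y = [set y in p] ->
  (forall u v, u \in Y -> v \in Y -> e u v = false) ->
  (forall i j, i < size p -> j < size p ->
          e (nth x p i) (nth x p j) = (i == j.+1) || (j == i.+1)) ->
  i < size p -> nth x p i \in Y ->
  #|[set z in X | e z (nth x p i)]| = (0 < i) + (i.+1 < size p).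
Proof.
move=> up hS hYY hadj hi hy.
set y := nth x p i.
rewrite -sum1_card.
rewrite (eq_bigl (fun z => (z \in p) && e z y)); last first.
  move=> z; rewrite !inE.
  case hz: (e z y); rewrite ?andbF ?andbT //.
  have : (z \in X :|: Y) = (z \in p) by rewrite hS inE.
  rewrite inE; case: (boolP (z \in Y)) => hzY; last by rewrite orbF.
  by rewrite hYY in hz.
rewrite big_mkcondr /= -big_uniq // (big_nth x) /=.
rewrite (eq_big_nat _ _ (F2 := fun j => (j == i.+1) + (i == j.+1))); last first.
  move=> j /andP[_ hj]; rewrite /y hadj //.
  case: eqP => [->|_] /=; last by case: eqP.
  by rewrite (ltn_eqF (leqnSn i.+1)).
by rewrite big_split /= sum_eq_nat sum_eqS_nat (ltnW hi) andbT addnC.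
Qed.

Lemma path_facts (V : finType) (e : rel V) (X Y : {set V}) :
  induced_path e (X :|: Y) -> [disjoint X & Y] -> X != set0 ->
  (forall u v, u \in X -> v \in X -> e u v = false) ->
  (forall u v, u \in Y -> v \in Y -> e u v = false) ->
  (forall y, y \in Y -> 0 < #|[set z in X | e z y]| <= 2) /\
  \sum_(y in Y) #|[set z in X | e z y]| = #|X| + #|Y| - 1.
Proof.
move=> [x [s [up hS hadj]]] dXY /set0Pn [x0 hx0] hXX hYY.
set p := x :: s in up hS hadj *.
have hin : forall z, (z \in X :|: Y) = (z \in p) by move=> z; rewrite hS inE.
have hsz : #|X| + #|Y| = size p.
  move: (leq_card_setU X Y) => [_]; rewrite dXY => /eqP <-.
  rewrite hS cardsE; exact/card_uniqP.
split.
  move=> y hy.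
  have yp : y \in p by rewrite -hin inE hy orbT.
  have hi : index y p < size p by rewrite index_mem.
  have ny : nth x p (index y p) = y by rewrite nth_index.
  have n2 : 1 < size p.
    have hx0y : x0 != y.
      by apply/eqP => h; move: hy; rewrite -h (disjointFr dXY hx0).
    have : #|[set x0; y]| <= #|[set z in p]|.
      apply: subset_leq_card; apply/subsetP => z; rewrite in_set2.
      by case/orP => /eqP ->; rewrite in_set -hin inE ?hx0 ?hy ?orbT.
    by rewrite cards2 hx0y cardsE => /leq_trans; apply; apply: card_size.
  rewrite -ny (deg_formula (Y := Y)) //; last by rewrite ny.
  move: hi n2; case: (index y p) => [|i] /=.
    by move=> _ ->.
  by case: (i.+2 < size p).
rewrite (eq_bigl (fun y => (y \in p) && (y \in Y))); last first.
  by move=> y; rewrite -hin inE; case: (y \in Y); rewrite ?orbT ?andbT ?andbF.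
rewrite big_mkcondr -big_uniq // (big_nth x) /=.
rewrite (eq_big_nat _ _ (F2 := fun i => (nth x p i \in Y) * ((0 < i) + (i.+1 < size p)))); last first.
  move=> i /andP[_ hi]; case: ifP => hy; [by rewrite (deg_formula (Y := Y)) // mul1n | by rewrite mul0n].
rewrite hsz [size p]/= subn1 /=.
apply: (telesc (f := fun i => nth x p i \in Y : nat)) => i hi.
have hi1 : i.+1 < size p by [].
have hi0 : i < size p by apply: ltnW.
have e1 : e (nth x p i) (nth x p i.+1) by rewrite hadj // eqxx orbT.
have m0 : nth x p i \in X :|: Y by rewrite hin mem_nth.
have m1 : nth x p i.+1 \in X :|: Y by rewrite hin mem_nth.
rewrite !inE in m0 m1.
case h0: (nth x p i \in Y); case h1: (nth x p i.+1 \in Y) => //.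
  by rewrite hYY in e1.
by rewrite h0 orbF in m0; rewrite h1 orbF in m1; rewrite hXX in e1.
Qed.

Lemma cardD (V : finType) (X Y : {set V}) : [disjoint X & Y] -> #|X :|: Y| = #|X| + #|Y|.
Proof. by move=> d; move: (leq_card_setU X Y) => [_]; rewrite d => /eqP. Qed.

Lemma arith (a0 a1 b0 b1 : nat) :
  0 < a0 -> 0 < a1 -> 0 < b0 -> 0 < b1 ->
  a0 <= b0.+1 -> b0 <= a0.+1 -> a0 <= b1.+1 -> b1 <= a0.+1 ->
  a1 <= b0.+1 -> b0 <= a1.+1 -> a1 <= b1.+1 -> b1 <= a1.+1 ->
  4 * (a0 + a1) <= a0 * a1 + 8 -> b0 + b1 <= a0 * a1 ->
  4 * (b0 + b1) <= b0 * b1 + 8 -> a0 + a1 <= b0 * b1 ->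
  28 <= a0 + a1 + b0 + b1.
Proof. intros. nia. Qed.

Lemma side (V : finType) (e : rel V) (X0 X1 Y : {set V}) (t : nat) :
  (forall y, y \in Y -> 0 < #|[set z in X0 | e z y]| <= 2) ->
  (forall y, y \in Y -> 0 < #|[set z in X1 | e z y]| <= 2) ->
  \sum_(y in Y) #|[set z in X0 | e z y]| = #|X0| + #|Y| - 1 ->
  \sum_(y in Y) #|[set z in X1 | e z y]| = #|X1| + #|Y| - 1 ->
  let S := \sum_(y in Y) #|[set z in X0 | e z y]| * #|[set z in X1 | e z y]| in
  2 * (#|X0| + #|Y| - 1) + 2 * (#|X1| + #|Y| - 1) <= S + 4 * #|Y| /\ #|Y| <= S.
Proof.
move=> h0 h1 s0 s1 S; split.
  rewrite -s0 -s1 !big_distrr /= -big_split /= mulnC -sum_nat_const -big_split /=.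
  apply: leq_sum => y hy.
  move: (h0 y hy) (h1 y hy); set d0 := #|_|; set d1 := #|_|.
  case/andP => ? ?; case/andP => ? ?; nia.
rewrite -sum1_card; apply: leq_sum => y hy.
move: (h0 y hy) (h1 y hy) => /andP[? _] /andP[? _]; by rewrite muln_gt0; apply/andP.
Qed.
Lemma degE (V : finType) (e : rel V) (X : {set V}) y :
  #|[set x in X | e x y]| = \sum_(x in X) (e x y : nat).
Proof.
rewrite -sum1_card (eq_bigl (fun x => (x \in X) && e x y)); last by move=> x; rewrite inE.
by rewrite big_mkcondr /=; apply: eq_bigr => x _; case: (e x y).
Qed.

Lemma count_C4 (V : finType) (e : rel V) (e_sym : symmetric e) (e_irr : irreflexive e)
  (hC4 : no_C4 e) (X0 X1 W : {set V}) :
  [disjoint X0 & X1] ->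
  \sum_(y in W) #|[set x in X0 | e x y]| * #|[set x in X1 | e x y]| <= #|X0| * #|X1|.
Proof.
move=> dX.
apply: (@leq_trans (\sum_y #|[set x in X0 | e x y]| * #|[set x in X1 | e x y]|)).
  rewrite [X in _ <= X](bigID (fun y => y \in W)) /=; exact: leq_addr.
under eq_bigr => y _ do rewrite !degE big_distrl /=.
under eq_bigr => y _ do under eq_bigr => u _ do rewrite big_distrr /=.
rewrite exchange_big /=.
under eq_bigr => u _ do rewrite exchange_big /=.
rewrite -sum_nat_const; apply: leq_sum => u hu.
rewrite -sum1_card; apply: leq_sum => v hv.
have uv : u != v by apply/eqP => h; move: hv; rewrite -h (disjointFr dX hu).
rewrite (eq_bigr (fun y => ((e u y && e v y) : nat))); last by move=> y _; case: (e u y); case: (e v y).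
rewrite -big_mkcond /= sum1dep_card leqNgt; apply/negP => /card_gt1P [y1 [y2 [h1 h2 h12]]].
rewrite !inE in h1 h2.
case/andP: h1 => h1u h1v; case/andP: h2 => h2u h2v.
apply: hC4; exists u, y1, v, y2; split => //; last by rewrite e_sym.
  rewrite /= !inE !negb_or.
  have nu1 : u != y1 by apply/eqP => h; move: h1u; rewrite h e_irr.
  have nu2 : u != y2 by apply/eqP => h; move: h2u; rewrite h e_irr.
  have nv1 : y1 != v by apply/eqP => h; move: h1v; rewrite h e_irr.
  have nv2 : v != y2 by apply/eqP => h; move: h2v; rewrite h e_irr.
  by rewrite nu1 uv nu2 nv1 h12 nv2.
by rewrite e_sym.
Qed.

Theorem mainTheorem13 (V : finType) (e : rel V)
  (e_sym : symmetric e) (e_irr : irreflexive e)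
  (A B A0 A1 B0 B1 : {set V}) :
  sizeable_with e A B A0 A1 B0 B1 ->
  (forall s t : bool, induced_path e (part A0 A1 s :|: part B0 B1 t)) ->
  28 <= #|V|.
Proof.
move=> [[hAB dAB hbip] hC4 [hA dA nA0 nA1] [hB dB nB0 nB1] _] hpath.
have noAA : forall u v, u \in A -> v \in A -> e u v = false.
  move=> u v hu hv; apply/negP => /hbip.
  by rewrite hu hv (disjointFr dAB hu) (disjointFr dAB hv).
have noBB : forall u v, u \in B -> v \in B -> e u v = false.
  move=> u v hu hv; apply/negP => /hbip.
  by rewrite hu hv (disjointFl dAB hu) (disjointFl dAB hv) !andbF.
have sA : forall s, part A0 A1 s \subset A.
  by case; rewrite hA ?subsetUr ?subsetUl.
have sB : forall t, part B0 B1 t \subset B.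
  by case; rewrite hB ?subsetUr ?subsetUl.
have nA : forall s, part A0 A1 s != set0 by case.
have nB : forall t, part B0 B1 t != set0 by case.
have dst : forall s t, [disjoint part A0 A1 s & part B0 B1 t].
  by move=> s t; apply: disjointW (sA s) (sB t) dAB.
have P1 : forall s t,
  (forall y, y \in part B0 B1 t -> 0 < #|[set z in part A0 A1 s | e z y]| <= 2) /\
  \sum_(y in part B0 B1 t) #|[set z in part A0 A1 s | e z y]| =
     #|part A0 A1 s| + #|part B0 B1 t| - 1.
  move=> s t; apply: path_facts => //.
  - by move=> u v hu hv; apply: noAA; apply: (subsetP (sA s)).
  - by move=> u v hu hv; apply: noBB; apply: (subsetP (sB t)).
have P2 : forall s t,
  (forall y, y \in part A0 A1 s -> 0 < #|[set z in part B0 B1 t | e z y]| <= 2) /\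
  \sum_(y in part A0 A1 s) #|[set z in part B0 B1 t | e z y]| =
     #|part B0 B1 t| + #|part A0 A1 s| - 1.
  move=> s t; apply: path_facts => //.
  - by rewrite setUC.
  - by rewrite disjoint_sym.
  - by move=> u v hu hv; apply: noBB; apply: (subsetP (sB t)).
  - by move=> u v hu hv; apply: noAA; apply: (subsetP (sA s)).
have bnd1 : forall s t, #|part A0 A1 s| <= (#|part B0 B1 t|).+1.
  move=> s t; case: (P1 s t) => h1 h2.
  have : \sum_(y in part B0 B1 t) #|[set z in part A0 A1 s | e z y]| <= \sum_(y in part B0 B1 t) 2.
    by apply: leq_sum => y hy; case/andP: (h1 y hy).
  rewrite h2 sum_nat_const.
  have := nA s; have := nB t; rewrite -!card_gt0; lia.
have bnd2 : forall s t, #|part B0 B1 t| <= (#|part A0 A1 s|).+1.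
  move=> s t; case: (P2 s t) => h1 h2.
  have : \sum_(y in part A0 A1 s) #|[set z in part B0 B1 t | e z y]| <= \sum_(y in part A0 A1 s) 2.
    by apply: leq_sum => y hy; case/andP: (h1 y hy).
  rewrite h2 sum_nat_const.
  have := nA s; have := nB t; rewrite -!card_gt0; lia.
have SA : forall t,
  let S := \sum_(y in part B0 B1 t) #|[set z in A0 | e z y]| * #|[set z in A1 | e z y]| in
  2 * (#|A0| + #|part B0 B1 t| - 1) + 2 * (#|A1| + #|part B0 B1 t| - 1) <= S + 4 * #|part B0 B1 t|
  /\ #|part B0 B1 t| <= S.
  move=> t; apply: (side 0).
  - exact: (P1 false t).1.
  - exact: (P1 true t).1.
  - exact: (P1 false t).2.
  - exact: (P1 true t).2.
have SB : forall s,
  let S := \sum_(y in part A0 A1 s) #|[set z in B0 | e z y]| * #|[set z in B1 | e z y]| in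
  2 * (#|B0| + #|part A0 A1 s| - 1) + 2 * (#|B1| + #|part A0 A1 s| - 1) <= S + 4 * #|part A0 A1 s|
  /\ #|part A0 A1 s| <= S.
  move=> s; apply: (side 0).
  - exact: (P2 s false).1.
  - exact: (P2 s true).1.
  - exact: (P2 s false).2.
  - exact: (P2 s true).2.
have CA := count_C4 e_sym e_irr hC4 (B0 :|: B1) dA.
rewrite (eq_bigl [predU B0 & B1]) ?bigU // in CA; last by move=> y; rewrite !inE.
have CB := count_C4 e_sym e_irr hC4 (A0 :|: A1) dB.
rewrite (eq_bigl [predU A0 & A1]) ?bigU // in CB; last by move=> y; rewrite !inE.
have hV : #|V| = #|A0| + #|A1| + #|B0| + #|B1|.
  by rewrite -cardsT -hAB cardD // {1}hA {1}hB cardD // cardD // addnA.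
rewrite hV.
have := SA false; have := SA true; have := SB false; have := SB true; rewrite /=.
move: CA CB.
have := bnd1 false false; have := bnd1 false true; have := bnd1 true false; have := bnd1 true true.
have := bnd2 false false; have := bnd2 false true; have := bnd2 true false; have := bnd2 true true.
have := nA false; have := nA true; have := nB false; have := nB true; rewrite -!card_gt0 /=.
set a0 := #|A0|; set a1 := #|A1|; set b0 := #|B0|; set b1 := #|B1|.
set SA0 := \sum_(y in B0) _; set SA1 := \sum_(y in B1) _.
set SB0 := \sum_(y in A0) _; set SB1 := \sum_(y in A1) _.
move=> hb1 hb0 ha1 ha0 r1 r2 r3 r4 r5 r6 r7 r8 CA CB [x1 y1] [x2 y2] [x3 y3] [x4 y4].
apply: arith => //; lia.
Qed.
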